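(* Let $N\ge 3$. For every sufficiently small $\varepsilon_0>0$ there exists $p_0>0$ such that for each $p\ge p_0$ one has $\tilde\eta \le 0$ on $[\zeta_1^*,\infty)$, where $\tilde\eta$ and $\zeta_1^*$ are defined in the context.
   Context: For $p>\frac{N+2}{N-2}$ let $\theta = \frac{2}{p-1}$, $A_{p,N} = [\theta(N-2-\theta)]^{\frac{1}{p-1}}$, $m = [\theta(N-2-\theta)]^{-1/2}$, $\alpha = m(N-2-2\theta)$, $\beta = \sqrt{|p-1-(\alpha/2)^2|}$, $D_p = \frac{m^2}{4m^2+2\alpha m + (p-1)}$, $f(\zeta) = D_p e^{-2m\zeta}$, $\phi(x) = -((1+x)^p-1-px)$. Let $U_p^*$ be the unique solution of $-u''-\frac{N-1}{r}u'+u=u^p$ on $(0,\infty)$, $u>0$, $\lim_{r\to0^+}r^\theta u(r) = A_{p,N}$. Define $\eta(\zeta) = A_{p,N}^{-1} r^\theta U_p^*(r) - 1$ where $r = e^{-m\zeta}$, $\zeta\in\mathbb{R}$, and $\tilde\eta = \eta - f$. Fix a constant $\tilde c\in(0,1)$ such that, for all sufficiently large $p$, $P_N < \frac12\frac{1-e^{-(\alpha+8m)\pi/(2\beta)}}{1+e^{-(\alpha+8m)\pi/(2\beta)}}$ if $N<10$ and $P_N<\frac12$ if $N\ge10$ (such $\tilde c$ exists), where $\tilde\zeta_p$ is defined by $e^{-m\tilde\zeta_p} = \tilde c/\sqrt p$ and $P_N := \frac{|\phi(f(\tilde\zeta_p))|}{f(\tilde\zeta_p)}\cdot\frac{4}{(\alpha+8m)^2+4\beta^2}(1+e^{-\frac{(\alpha+8m)\pi}{2\beta}})$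 if $N<10$, $P_N := \frac{|\phi(f(\tilde\zeta_p))|}{f(\tilde\zeta_p)}\cdot\frac{1}{2\beta(\alpha/2+4m-\beta)}$ if $N\ge10$. For $\varepsilon_0>0$, $$\zeta_1^* := \inf\{\zeta\ge\tilde\zeta_p : |\tilde\eta(z)|\le(1+\varepsilon_0)P_N f(z)\text{ for all } z\ge\zeta\}.$$ *)

(* Defs.v *)
From Stdlib Require Import Reals.
From Coquelicot Require Import Coquelicot.
Open Scope R_scope.

Section Defs.
Variables (N : nat) (p : R).

Definition theta : R := 2 / (p - 1).
Definition kappa : R := theta * (INR N - 2 - theta).
Definition A_pN : R := Rpower kappa (1 / (p - 1)).
Definition m_p : R := / sqrt kappa.
Definition alpha_p : R := m_p * (INR N - 2 - 2 * theta).
Definition beta_p : R := sqrt (Rabs (p - 1 - (alpha_p / 2) ^ 2)).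
Definition D_p : R := m_p ^ 2 / (4 * m_p ^ 2 + 2 * alpha_p * m_p + (p - 1)).
Definition f_p (z : R) : R := D_p * exp (- 2 * m_p * z).
Definition phi_p (x : R) : R := - (Rpower (1 + x) p - 1 - p * x).

Definition is_Ustar (U : R -> R) : Prop :=
  exists U1 U2 : R -> R,
    (forall r, 0 < r ->
       is_derive U r (U1 r) /\ is_derive U1 r (U2 r) /\
       - U2 r - (INR N - 1) / r * U1 r + U r = Rpower (U r) p) /\
    (forall r, 0 < r -> 0 < U r) /\
    filterlim (fun r => Rpower r theta * U r) (at_right 0) (locally A_pN).

Definition eta_p (U : R -> R) (z : R) : R :=
  let r := exp (- m_p * z) in / A_pN * Rpower r theta * U r - 1.

Definition eta_tilde (U : R -> R) (z : R) : R := eta_p U z - f_p z.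

(** zeta_tilde_p: the unique real with e^{-m zeta} = c / sqrt p *)
Definition zeta_tilde (c : R) : R := - ln (c / sqrt p) / m_p.

Definition E_p : R := exp (- (alpha_p + 8 * m_p) * PI / (2 * beta_p)).

Definition P_N (c : R) : R :=
  let zt := zeta_tilde c in
  let q := Rabs (phi_p (f_p zt)) / f_p zt in
  if (N <? 10)%nat then
    q * (4 / ((alpha_p + 8 * m_p) ^ 2 + 4 * beta_p ^ 2)) * (1 + E_p)
  else
    q * (1 / (2 * beta_p * (alpha_p / 2 + 4 * m_p - beta_p))).

Definition c_condition (c : R) : Prop :=
  if (N <? 10)%nat then P_N c < / 2 * ((1 - E_p) / (1 + E_p))
  else P_N c < / 2.

Definition zeta1_set (U : R -> R) (c eps0 : R) (z : R) : Prop :=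
  zeta_tilde c <= z /\
  forall y, z <= y -> Rabs (eta_tilde U y) <= (1 + eps0) * P_N c * f_p y.

(** zeta_1^* as an element of Rbar (+oo when the set is empty). *)
Definition zeta1_star (U : R -> R) (c eps0 : R) : Rbar :=
  Glb_Rbar (zeta1_set U c eps0).

End Defs.

(* Main.v *)
Require Import Defs.
From Stdlib Require Import Reals.
From Coquelicot Require Import Coquelicot.
From Stdlib Require Import Lra Psatz ZArith Classical.
Open Scope R_scope.

Lemma cont_of_deriv (F : R -> R) x l : is_derive F x l -> continuity_pt F x.
Proof. intros H. apply continuity_pt_filterlim.
  apply (@ex_derive_continuous R_AbsRing R_NormedModule). eexists; apply H. Qed.

Lemma mono_deriv (F dF : R -> R) a b : a <= b ->
  (forall x, a <= x <= b -> is_derive F x (dF x)) -> (forall x, a <= x <= b -> 0 <= dF x) -> F a <= F b.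
Proof.
  intros Hab HD Hpos.
  destruct (MVT_gen F a b dF) as [c [Hc Heq]].
  - intros x Hx; apply HD. rewrite Rmin_left in Hx by lra. rewrite Rmax_right in Hx by lra. lra.
  - intros x Hx. rewrite Rmin_left in Hx by lra. rewrite Rmax_right in Hx by lra.
    apply (cont_of_deriv _ _ (dF x)). apply HD; lra.
  - rewrite Rmin_left in Hc by lra. rewrite Rmax_right in Hc by lra.
    assert (0 <= dF c * (b - a)) by (apply Rmult_le_pos; [apply Hpos; lra| lra]). lra.
Qed.

Lemma exp_taylor2 t : 0 <= t -> 1 + t + t^2/2 <= exp t.
Proof.
  intros Ht.
  assert (H := mono_deriv (fun t => exp t - 1 - t - t^2/2) (fun t => exp t - 1 - t) 0 t Ht).
  simpl in H. rewrite exp_0 in H.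
  assert (1 - 1 - 0 - 0 * (0 * 1) / 2 <= exp t - 1 - t - t * (t * 1) / 2).
  { apply H.
    - intros x _. auto_derive; auto. field.
    - intros x Hx. destruct (Req_dec x 0). subst; rewrite exp_0; lra.
      pose proof (exp_ineq1 x H0); lra. }
  lra.
Qed.

Lemma ln_lower y : 0 <= y -> y - y^2/2 <= ln (1 + y).
Proof.
  intros Hy.
  assert (H := mono_deriv (fun y => ln (1+y) - y + y^2/2) (fun y => y^2/(1+y)) 0 y Hy).
  simpl in H. replace (1+0) with 1 in H by ring. rewrite ln_1 in H.
  assert (0 - 0 + 0 * (0*1)/2 <= ln (1 + y) - y + y * (y * 1) / 2).
  { apply H.
    - intros x Hx. auto_derive. lra. field. lra.
    - intros x Hx. apply Rmult_le_pos. nra. apply Rlt_le, Rinv_0_lt_compat; lra. }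
  lra.
Qed.

Lemma ln_upper y : 0 < 1 + y -> ln (1 + y) <= y.
Proof.
  intros Hy. destruct (Req_dec y 0). subst. rewrite Rplus_0_r, ln_1; lra.
  pose proof (exp_ineq1 y H). rewrite <- (ln_exp y) at 2. apply ln_le; lra.
Qed.

Lemma exp_upper t : t < 1 -> exp t <= / (1 - t).
Proof.
  intros Ht. destruct (Req_dec t 0). subst. rewrite exp_0. lra.
  assert (1 - t < exp (- t)) by (pose proof (exp_ineq1 (-t)); lra).
  rewrite exp_Ropp in H0. 
  assert (0 < exp t) by apply exp_pos.
  apply (Rmult_le_reg_r (1 - t)). lra. rewrite Rinv_l by lra.
  apply (Rmult_le_reg_r (/ exp t)). apply Rinv_0_lt_compat; lra.
  replace (exp t * (1 - t) * / exp t) with (1 - t) by (field; lra). lra.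
Qed.


Ltac fixD H := repeat match goal with |- context [Derive ?f ?y] => rewrite (is_derive_unique f y _ (H y)) end.





Lemma le_0_of_seq v K a : 0 < a -> (forall n : nat, v <= K / (1 + INR n * a)) -> v <= 0.
Proof.
  intros Ha H. destruct (Rle_dec v 0) as [|Hv]; auto. exfalso.
  assert (Hv' : 0 < v) by lra.
  pose proof (H 0%nat) as H0. simpl in H0. 
  assert (HK : 0 < K) by (replace (K / (1 + 0 * a)) with K in H0 by field; lra).
  destruct (archimed (K / (v * a))) as [Hup _].
  set (n := Z.to_nat (up (K / (v * a)))).
  assert (Hn : K / (v * a) < INR n).
  { unfold n. rewrite INR_IZR_INZ. rewrite Z2Nat.id. lra.
    apply le_IZR. assert (0 < K / (v * a)) by (apply Rdiv_lt_0_compat; nra). lra. }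
  specialize (H n).
  assert (0 <= INR n) by apply pos_INR.
  assert (Hd : 0 < 1 + INR n * a) by nra.
  apply (Rmult_le_compat_r (1 + INR n * a)) in H; [|lra].
  replace (K / (1 + INR n * a) * (1 + INR n * a)) with K in H by (field; lra).
  apply (Rmult_lt_compat_r (v * a)) in Hn; [|nra].
  replace (K / (v * a) * (v * a)) with K in Hn by (field; split; lra).
  nra.
Qed.

Lemma complex_case (a b q : R) (g g1 g2 h : R -> R) (z K c : R) :
  0 < b -> q - a^2 = b^2 -> 0 < c ->
  (forall x, is_derive g x (g1 x)) -> (forall x, is_derive g1 x (g2 x)) ->
  (forall x, g2 x - 2 * a * g1 x + q * g x = h x) ->
  (forall x, z < x -> exp(-a*x) * h x <= exp(-a*(x+PI/b)) * h (x + PI/b)) ->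
  (forall x, z < x -> Rabs (exp(-a*x) * g x) <= K * exp(-c*x)) ->
  forall s, z < s -> g s <= 0.
Proof.
  intros Hb Hq Hc Hg Hg1 Hode Hk Hbd.
  set (T := PI / b).
  assert (HT : 0 < T) by (unfold T; apply Rdiv_lt_0_compat; [apply PI_RGT_0|lra]).
  set (v := fun x => exp(-a*x) * g x).
  set (v1 := fun x => exp(-a*x) * (g1 x - a * g x)).
  set (k := fun x => exp(-a*x) * h x).
  assert (Hv : forall x, is_derive v x (v1 x)).
  { intros x. unfold v, v1. auto_derive. eexists; apply Hg. fixD Hg. field. }
  assert (Hv1 : forall x, is_derive v1 x (k x - b^2 * v x)).
  { intros x. unfold v1, k, v. auto_derive. split; [eexists; apply Hg1|split;[eexists; apply Hg|auto]].
    fixD Hg1. fixD Hg. rewrite <- (Hode x). rewrite <- Hq. field. }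
  assert (Hvd : forall x, v x = exp(-a*x) * g x) by reflexivity.
  assert (Hkd : forall x, k x = exp(-a*x) * h x) by reflexivity.
  clearbody v v1 k.
  set (Q := fun s t => v1 (s + t) * sin (b * t) - b * v (s + t) * cos (b * t)).
  assert (HQ : forall s t, is_derive (Q s) t (k (s + t) * sin (b * t))).
  { intros s t. unfold Q. auto_derive.
    split; [eexists; apply Hv1|split;[eexists; apply Hv|auto]].
    fixD Hv1. fixD Hv. unfold Rdiv. field. }
  assert (Hstep : forall s, z < s -> v s <= v (s + 2 * T)).
  { intros s Hs.
    assert (HbT : b * T = PI) by (unfold T; field; lra).
    assert (Hm := mono_deriv (fun t => Q (s + T) t - Q s t)
              (fun t => (k (s + T + t) - k (s + t)) * sin (b * t)) 0 T (Rlt_le _ _ HT)).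
    simpl in Hm. unfold Q in Hm.
    rewrite !Rmult_0_r, sin_0, cos_0, HbT, sin_PI, cos_PI, !Rplus_0_r in Hm.
    replace (s + T + T) with (s + 2 * T) in Hm by ring.
    assert (Hr : b * v s - b * v (s + T) <= b * v (s + 2 * T) - b * v (s + T)).
    { match type of Hm with _ -> _ -> ?A <= ?B => assert (A <= B) end; [| lra].
      apply Hm.
      - intros t _. 
        assert (E : forall t, (k (s + T + t) - k (s + t)) * sin (b * t) = k (s + T + t) * sin (b * t) - k (s + t) * sin (b * t)) by (intros; ring).
        rewrite E. apply (is_derive_minus (Q (s + T)) (Q s)).
        + apply HQ.
        + apply HQ.
      - intros t Ht. apply Rmult_le_pos.
        + assert (z < s + t) by lra. specialize (Hk _ H). rewrite <- !Hkd in Hk.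
          fold T in Hk. replace (s + t + T) with (s + T + t) in Hk by ring. lra.
        + apply sin_ge_0. nra. rewrite <- HbT. apply Rmult_le_compat_l; lra. }
    apply (Rmult_le_reg_l b); lra. }
  assert (Hiter : forall s, z < s -> forall n : nat, v s <= v (s + 2 * INR n * T)).
  { intros s Hs n. induction n.
    - simpl. rewrite Rmult_0_r, Rmult_0_l, Rplus_0_r. lra.
    - rewrite S_INR. eapply Rle_trans. apply IHn.
      replace (s + 2 * (INR n + 1) * T) with ((s + 2 * INR n * T) + 2 * T) by ring.
      apply Hstep. pose proof (pos_INR n). nra. }
  intros s Hs.
  assert (Hvs : v s <= 0).
  { apply (le_0_of_seq _ (K * exp (- c * s)) (2 * c * T)). nra.
    intros n. eapply Rle_trans. apply (Hiter s Hs n).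
    assert (Hn := pos_INR n).
    assert (Hz : z < s + 2 * INR n * T) by nra.
    specialize (Hbd _ Hz). rewrite <- Hvd in Hbd.
    eapply Rle_trans. apply Rle_abs. eapply Rle_trans. apply Hbd.
    assert (HK : 0 <= K). { assert (0 <= Rabs (v (s + 2 * INR n * T))) by apply Rabs_pos.
      pose proof (exp_pos (- c * (s + 2 * INR n * T))). nra. }
    replace (- c * (s + 2 * INR n * T)) with (- c * s + - (INR n * (2 * c * T))) by ring.
    rewrite exp_plus, exp_Ropp.
    assert (He : 1 + INR n * (2 * c * T) <= exp (INR n * (2 * c * T))).
    { destruct (Req_dec (INR n * (2 * c * T)) 0) as [E|E]. rewrite E, exp_0; lra.
      apply Rlt_le, exp_ineq1; auto. }
    assert (0 <= INR n * (2 * c * T)) by (apply Rmult_le_pos; [lra| nra]).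
    assert (0 < 1 + INR n * (2 * c * T)) by lra.
    pose proof (exp_pos (- c * s)).
    unfold Rdiv. rewrite <- Rmult_assoc. apply Rmult_le_compat_l. nra.
    apply Rinv_le_contravar; lra. }
  rewrite Hvd in Hvs. apply (Rmult_le_reg_l (exp (-a*s))). apply exp_pos. lra.
Qed.





Lemma abs_le_inv x b : Rabs x <= b -> -b <= x <= b.
Proof. unfold Rabs; destruct (Rcase_abs x); lra. Qed.

Lemma decay_le0 w K c s : 0 < c -> (forall x, s < x -> w <= K * exp (- c * x)) -> w <= 0.
Proof.
  intros Hc H. 
  assert (HK : 0 <= K \/ K < 0) by lra. destruct HK as [HK|HK].
  2:{ specialize (H (s+1)). pose proof (exp_pos (- c * (s + 1))). assert (s < s + 1) by lra. 
      specialize (H H1). nra. }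
  apply (le_0_of_seq _ (K * exp (- c * (s + 1))) c Hc).
  intros n. assert (Hn := pos_INR n).
  specialize (H (s + 1 + INR n)). eapply Rle_trans. apply H. lra.
  replace (- c * (s + 1 + INR n)) with (- c * (s + 1) + - (INR n * c)) by ring.
  rewrite exp_plus, exp_Ropp.
  assert (He : 1 + INR n * c <= exp (INR n * c)).
  { destruct (Req_dec (INR n * c) 0) as [E|E]. rewrite E, exp_0; lra.
    apply Rlt_le, exp_ineq1; auto. }
  assert (0 <= INR n * c) by nra.
  pose proof (exp_pos (- c * (s + 1))).
  unfold Rdiv. rewrite <- Rmult_assoc. apply Rmult_le_compat_l. nra.
  apply Rinv_le_contravar; lra.
Qed.

Lemma real_case (a b q : R) (g g1 g2 h : R -> R) (z K c : R) :
  0 <= b -> q - a^2 = - b^2 -> 0 < c ->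
  (forall x, is_derive g x (g1 x)) -> (forall x, is_derive g1 x (g2 x)) ->
  (forall x, g2 x - 2 * a * g1 x + q * g x = h x) ->
  (forall x, z < x -> h x <= 0) ->
  (forall x, z < x -> Rabs (exp((b-a)*x) * g x) <= K * exp(-c*x)) ->
  forall s, z < s -> g s <= 0.
Proof.
  intros Hb Hq Hc Hg Hg1 Hode Hh Hbd.
  set (V := fun x => exp((b-a)*x) * g x).
  set (V1 := fun x => exp((b-a)*x) * (g1 x + (b-a) * g x)).
  set (Y := fun x => exp(-2*b*x) * V1 x).
  assert (HV : forall x, is_derive V x (V1 x)).
  { intros x. unfold V, V1. auto_derive. eexists; apply Hg. fixD Hg. field. }
  assert (HY : forall x, is_derive Y x (exp(-2*b*x) * exp((b-a)*x) * h x)).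
  { intros x. unfold Y, V1. auto_derive. split; [eexists; apply Hg1|split;[eexists; apply Hg|auto]].
    fixD Hg1. fixD Hg. rewrite <- (Hode x). 
    replace q with (a^2 - b^2) by lra. field. }
  assert (Hvd : forall x, V x = exp((b-a)*x) * g x) by reflexivity.
  assert (Hyd : forall x, Y x = exp(-2*b*x) * V1 x) by reflexivity.
  clearbody V V1 Y.
  intros s Hs.
  assert (HVs : V s <= 0).
  { destruct (Rle_dec (V s) 0) as [|HVs]; auto. exfalso.
    assert (HVs' : 0 < V s) by lra.
    destruct (classic (exists x1, s < x1 /\ V x1 < V s)) as [[x1 [Hx1 HVx1]]|Hno].
    2:{ apply HVs. apply (decay_le0 _ K c s Hc). intros x Hx.
        assert (V s <= V x). { destruct (Rle_dec (V s) (V x)); auto. exfalso. apply Hno. exists x. split; auto. lra. }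
        eapply Rle_trans. apply H. eapply Rle_trans. apply Rle_abs. rewrite Hvd. apply Hbd. lra. }
    destruct (MVT_gen V s x1 V1) as [c0 [Hc0 Heq]].
    - intros x _; apply HV.
    - intros x _. apply (cont_of_deriv _ _ (V1 x)). apply HV.
    - rewrite Rmin_left in Hc0 by lra. rewrite Rmax_right in Hc0 by lra.
      assert (HV1c : V1 c0 < 0).
      { destruct (Rlt_dec (V1 c0) 0); auto. exfalso. assert (0 <= V1 c0 * (x1 - s)) by (apply Rmult_le_pos; lra). lra. }
      assert (HYd : forall x, c0 <= x -> Y x <= Y c0).
      { intros x Hx. 
        assert (Hm := mono_deriv (fun x => - Y x) (fun x => - (exp(-2*b*x) * exp((b-a)*x) * h x)) c0 x Hx).
        simpl in Hm. assert (- Y c0 <= - Y x); [|lra]. apply Hm.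
        - intros y _. apply (is_derive_opp Y). apply HY.
        - intros y Hy. assert (h y <= 0) by (apply Hh; lra).
          pose proof (exp_pos (-2*b*y)). pose proof (exp_pos ((b-a)*y)).
          assert (0 < exp (-2*b*y) * exp ((b-a)*y)) by (apply Rmult_lt_0_compat; auto). nra. }
      assert (HV1le : forall x, c0 <= x -> V1 x <= V1 c0).
      { intros x Hx. specialize (HYd x Hx). rewrite !Hyd in HYd.
        assert (Y c0 < 0) by (rewrite Hyd; pose proof (exp_pos (-2*b*c0)); nra).
        rewrite Hyd in H.
        assert (exp (-2*b*x) <= exp (-2*b*c0)). { destruct (Req_dec b 0). subst. rewrite !Rmult_0_r, !Rmult_0_l. lra.
          destruct (Req_dec x c0). subst; lra. apply Rlt_le, exp_increasing; nra. }
        pose proof (exp_pos (-2*b*x)). pose proof (exp_pos (-2*b*c0)).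
        (* V1 x = Y x / e(x) <= Y c0 / e(x) <= Y c0 / e(c0) = V1 c0 *)
        set (ex := exp (-2*b*x)) in *. set (e0 := exp (-2*b*c0)) in *.
        assert (V1 x <= e0 * V1 c0 / ex).
        { apply (Rmult_le_reg_l ex); auto. replace (ex * (e0 * V1 c0 / ex)) with (e0 * V1 c0) by (field; lra). lra. }
        assert (e0 * V1 c0 / ex <= V1 c0).
        { apply (Rmult_le_reg_l ex); auto. replace (ex * (e0 * V1 c0 / ex)) with (e0 * V1 c0) by (field; lra). nra. }
        lra. }
      assert (HVle : forall x, c0 <= x -> V x <= V c0 + V1 c0 * (x - c0)).
      { intros x Hx.
        assert (Hm := mono_deriv (fun x => V c0 + V1 c0 * (x - c0) - V x) (fun x => V1 c0 - V1 x) c0 x Hx).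
        simpl in Hm. assert (V c0 + V1 c0 * (c0 - c0) - V c0 <= V c0 + V1 c0 * (x - c0) - V x); [|lra].
        apply Hm.
        - intros y _. auto_derive. eexists; apply HV. fixD HV. ring.
        - intros y Hy. specialize (HV1le y (proj1 Hy)). lra. }
      set (B := K * exp (- c * c0)).
      set (x2 := c0 + (V c0 + Rabs B + 1) / (- V1 c0)).
      assert (Hx2 : c0 < x2). { unfold x2. assert (0 < (V c0 + Rabs B + 1) / - V1 c0); [|lra].
        apply Rdiv_lt_0_compat; [|lra]. 
        assert (V c0 >= - Rabs B). { 
          assert (Hz : z < c0) by lra. specialize (Hbd c0 Hz). rewrite <- Hvd in Hbd.
          apply abs_le_inv in Hbd. fold B in Hbd. pose proof (Rle_abs B). lra. }
        lra. }
      specialize (HVle x2 (Rlt_le _ _ Hx2)).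
      assert (HVx2 : V1 c0 * (x2 - c0) = - (V c0 + Rabs B + 1)).
      { unfold x2. field. lra. }
      assert (Hz : z < x2) by lra. specialize (Hbd x2 Hz). rewrite <- Hvd in Hbd.
      apply abs_le_inv in Hbd.
      assert (K * exp (- c * x2) <= Rabs B).
      { unfold B. destruct (Rle_dec 0 K).
        - rewrite Rabs_pos_eq by (pose proof (exp_pos (- c * c0)); nra).
          apply Rmult_le_compat_l; auto. apply Rlt_le, exp_increasing. nra.
        - pose proof (exp_pos (- c * x2)). pose proof (Rabs_pos (K * exp (- c * c0))). nra. }
      lra. }
  rewrite Hvd in HVs. apply (Rmult_le_reg_l (exp ((b-a)*s))). apply exp_pos. lra.
Qed.


Lemma consts N p : 3 <= INR N -> 1000 <= p ->
  0 < theta p <= 1/400 /\ (p-1) * theta p = 2 /\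
  kappa N p = theta p * (INR N - 2 - theta p) /\ 0 < kappa N p /\
  0 < m_p N p /\ m_p N p ^ 2 * kappa N p = 1 /\
  alpha_p N p = m_p N p * (INR N - 2 - 2 * theta p) /\ 0 <= alpha_p N p /\
  0 < D_p N p /\ D_p N p <= 1/4 /\
  D_p N p * (4 * m_p N p ^ 2 + 2 * alpha_p N p * m_p N p + (p - 1)) = m_p N p ^ 2 /\
  4 * m_p N p ^ 2 + 2 * alpha_p N p * m_p N p + (p - 1) <= 7 * p /\
  (p - 1) / (2 * (INR N - 2)) <= m_p N p ^ 2.
Proof.
  intros HN Hp.
  assert (Hth : theta p = 2 / (p - 1)) by reflexivity.
  assert (Hth1 : 0 < theta p <= 1/400).
  { rewrite Hth. split. apply Rdiv_lt_0_compat; lra.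
    apply (Rmult_le_reg_r (p-1)). lra. unfold Rdiv. rewrite Rmult_assoc, Rinv_l by lra. lra. }
  assert (Hth2 : (p-1) * theta p = 2) by (rewrite Hth; field; lra).
  set (th := theta p) in *.
  assert (Hka : kappa N p = th * (INR N - 2 - th)) by reflexivity.
  assert (Hkapos : 0 < kappa N p) by (rewrite Hka; nra).
  set (ka := kappa N p) in *.
  assert (Hsq : 0 < sqrt ka) by (apply sqrt_lt_R0; lra).
  assert (Hm : m_p N p = / sqrt ka) by reflexivity.
  assert (Hmpos : 0 < m_p N p) by (rewrite Hm; apply Rinv_0_lt_compat; lra).
  assert (Hm2 : m_p N p ^ 2 * ka = 1).
  { rewrite Hm. replace ((/ sqrt ka) ^ 2 * ka) with (ka / (sqrt ka * sqrt ka)) by (field; lra).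
    rewrite sqrt_sqrt by lra. field; lra. }
  set (m := m_p N p) in *.
  assert (Hal : alpha_p N p = m * (INR N - 2 - 2 * th)) by reflexivity.
  assert (Halpos : 0 <= alpha_p N p) by (rewrite Hal; apply Rmult_le_pos; lra).
  set (al := alpha_p N p) in *.
  assert (Hden : 0 < 4 * m ^ 2 + 2 * al * m + (p - 1)) by nra.
  assert (HD : D_p N p = m ^ 2 / (4 * m ^ 2 + 2 * al * m + (p - 1))) by reflexivity.
  set (den := 4 * m ^ 2 + 2 * al * m + (p - 1)) in *.
  assert (HDpos : 0 < D_p N p) by (rewrite HD; apply Rdiv_lt_0_compat; nra).
  assert (HD4 : D_p N p <= 1/4).
  { rewrite HD. apply (Rmult_le_reg_r den). lra. unfold Rdiv. rewrite Rmult_assoc, Rinv_l by lra.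
    unfold den. nra. }
  assert (HDden : D_p N p * den = m^2) by (rewrite HD; field; lra).
  assert (Hm2' : m ^ 2 = / ka) by (apply (Rmult_eq_reg_r ka); [rewrite Rinv_l; lra|lra]).
  assert (Hmlow : (p - 1) / (2 * (INR N - 2)) <= m ^ 2).
  { rewrite Hm2'. apply (Rmult_le_reg_r (2 * (INR N - 2) * ka)). nra.
    unfold Rdiv. replace ((p - 1) * / (2 * (INR N - 2)) * (2 * (INR N - 2) * ka)) with ((p-1) * ka) by (field; lra).
    replace (/ ka * (2 * (INR N - 2) * ka)) with (2 * (INR N - 2)) by (field; lra).
    rewrite Hka. nra. }
  assert (Hden7 : den <= 7 * p).
  { unfold den. rewrite Hal.
    rewrite Hka in Hm2.
    assert (Hm2le : m ^ 2 <= p - 1).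
    { (* m^2 = 1/(th (N-2-th)) and th(N-2-th) >= th/2 = 1/(p-1) *)
      assert (th * (INR N - 2 - th) >= th / 2) by nra.
      assert (m^2 * (th / 2) <= 1) by nra.
      replace (th / 2) with (/ (p - 1)) in H0 by (apply (Rmult_eq_reg_l (p-1)); [rewrite Rinv_r by lra; lra | lra]).
      apply (Rmult_le_reg_r (/ (p-1))). apply Rinv_0_lt_compat; lra. rewrite Rinv_r by lra. lra. }
    assert (Halm : m * (INR N - 2 - 2 * th) * m <= p - 1).
    { assert (m * (INR N - 2 - 2 * th) * m = m^2 * (INR N - 2 - 2 * th)) by ring.
      rewrite H.
      (* m^2 (N-2-2th) <= m^2 (N-2-th) * ... = (1/th) * (N-2-2th)/(N-2-th) <= 1/th = (p-1)/2 *)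
      assert (m^2 * (INR N - 2 - 2 * th) <= m^2 * (INR N - 2 - th)) by nra.
      assert (m^2 * (INR N - 2 - th) * th = 1) by lra.
      assert (m^2 * (INR N - 2 - th) = (p-1)/2).
      { apply (Rmult_eq_reg_r th). rewrite H1. replace ((p-1)/2*th) with ((p-1)*th/2) by field. lra. lra. }
      lra. }
    nra. }
  repeat split; try lra; auto.
Qed.


Lemma alg_id (a E U U1 U2 Up r m th nN D al p : R) :
  r <> 0 ->
  -U2 - (nN-1)/r*U1 + U = Up ->
  al = m*(nN-2-2*th) -> m^2*(th*(nN-2-th)) = 1 -> D*(4*m^2+2*al*m+(p-1)) = m^2 ->
  (a*E*(m^2*th^2*U + 2*m^2*th*r*U1 + m^2*r*U1 + m^2*r^2*U2) - 4*m^2*D*(r*r))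
  - 2*(al/2)*(a*E*(-m*th*U - m*r*U1) + 2*m*D*(r*r)) + (p-1)*(a*E*U - 1 - D*(r*r))
  = -( a*E*m^2*(r*r)*Up - 1 - p*(a*E*U-1)) + m^2*(r*r)*(a*E*U-1).
Proof.
  intros Hr HU Hal Hm HD.
  assert (HU2 : U2 = U - Up - (nN-1)/r*U1) by lra. subst U2 al.
  apply Rminus_diag_uniq.
  assert (E1 : (a*E*(m^2*th^2*U + 2*m^2*th*r*U1 + m^2*r*U1 + m^2*r^2*(U - Up - (nN-1)/r*U1)) - 4*m^2*D*(r*r))
  - 2*((m*(nN-2-2*th))/2)*(a*E*(-m*th*U - m*r*U1) + 2*m*D*(r*r)) + (p-1)*(a*E*U - 1 - D*(r*r))
  - (-( a*E*m^2*(r*r)*Up - 1 - p*(a*E*U-1)) + m^2*(r*r)*(a*E*U-1))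
   = a*E*U*(m^2*(th*(nN-2-th)) - 1) - (r*r)*(D*(4*m^2+2*(m*(nN-2-2*th))*m+(p-1)) - m^2)) by (field; auto).
  rewrite E1, Hm, HD. ring.
Qed.


Lemma A_pos N p : 0 < A_pN N p.
Proof. unfold A_pN, Rpower. apply exp_pos. Qed.

Lemma rpow_a N p : 3 <= INR N -> 1000 <= p ->
  Rpower (/ A_pN N p) p = / A_pN N p * m_p N p ^ 2.
Proof.
  intros HN Hp. destruct (consts N p HN Hp) as (Hth & Hth2 & Hka & Hkapos & Hm & Hm2 & _).
  pose proof (A_pos N p) as HA.
  replace (Rpower (/ A_pN N p) p) with (Rpower (/ A_pN N p) (1 + (p - 1))) by (f_equal; ring).
  rewrite Rpower_plus, Rpower_1 by (apply Rinv_0_lt_compat; auto).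
  f_equal.
  replace (/ A_pN N p) with (Rpower (A_pN N p) (- (1))) by (rewrite Rpower_Ropp, Rpower_1; auto).
  rewrite Rpower_mult. unfold A_pN. rewrite Rpower_mult.
  replace (1 / (p - 1) * (- (1) * (p - 1))) with (- (1)) by (field; lra).
  rewrite Rpower_Ropp, Rpower_1 by auto.
  apply (Rmult_eq_reg_r (kappa N p)). rewrite Rinv_l; lra. lra.
Qed.

Lemma rpow_full N p (x Uv : R) : 3 <= INR N -> 1000 <= p -> 0 < Uv ->
  Rpower (/ A_pN N p * exp (theta p * (- m_p N p * x)) * Uv) p =
  / A_pN N p * exp (theta p * (- m_p N p * x)) * m_p N p ^ 2 *
    (exp (- m_p N p * x) * exp (- m_p N p * x)) * Rpower Uv p.
Proof.
  intros HN Hp HU. destruct (consts N p HN Hp) as (Hth & Hth2 & Hka & Hkapos & Hm & Hm2 & _).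
  pose proof (A_pos N p) as HA.
  rewrite <- !Rpower_mult_distr; try apply Rmult_lt_0_compat; try apply exp_pos; try apply Rinv_0_lt_compat; auto.
  rewrite (rpow_a N p HN Hp).
  assert (Rpower (exp (theta p * (- m_p N p * x))) p = exp (theta p * (- m_p N p * x)) * (exp (- m_p N p * x) * exp (- m_p N p * x))).
  { unfold Rpower at 1. rewrite ln_exp, <- !exp_plus. f_equal.
    replace (p * (theta p * (- m_p N p * x))) with (theta p * (- m_p N p * x) + (p-1) * theta p * (- m_p N p * x)) by ring.
    rewrite Hth2. ring. }
  rewrite H. ring.
Qed.

Lemma eta_explicit N p U x : eta_p N p U x =
  / A_pN N p * exp (theta p * (- m_p N p * x)) * U (exp (- m_p N p * x)) - 1.
Proof. unfold eta_p. unfold Rpower at 1. rewrite ln_exp. reflexivity. Qed.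

Lemma f_explicit N p x : f_p N p x = D_p N p * (exp (- m_p N p * x) * exp (- m_p N p * x)).
Proof. unfold f_p. rewrite <- exp_plus. replace (- m_p N p * x + - m_p N p * x) with (- 2 * m_p N p * x) by ring. reflexivity. Qed.

Ltac fixU HU := repeat match goal with |- context [Derive ?f (exp ?y)] =>
  first [rewrite (is_derive_unique f (exp y) _ (proj1 (HU _ (exp_pos y))))
        |rewrite (is_derive_unique f (exp y) _ (proj1 (proj2 (HU _ (exp_pos y)))))] end.

Lemma eta_ode N p U U1 U2 : 3 <= INR N -> 1000 <= p ->
 (forall r, 0 < r -> is_derive U r (U1 r) /\ is_derive U1 r (U2 r) /\
     - U2 r - (INR N - 1) / r * U1 r + U r = Rpower (U r) p) ->
 (forall r, 0 < r -> 0 < U r) ->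
 exists g1 g2 : R -> R, (forall x, is_derive (eta_tilde N p U) x (g1 x)) /\
   (forall x, is_derive g1 x (g2 x)) /\
 forall x, g2 x - 2 * (alpha_p N p / 2) * g1 x + (p - 1) * eta_tilde N p U x =
   phi_p p (eta_p N p U x) + m_p N p ^ 2 * (exp (- m_p N p * x) * exp (- m_p N p * x)) * eta_p N p U x.
Proof.
  intros HN Hp HU Hpos.
  destruct (consts N p HN Hp) as (Hth & Hth2 & Hka & Hkapos & Hm & Hm2 & Hal & Halpos & HD & HD4 & HDden & _).
  assert (Hext : forall x, eta_tilde N p U x = / A_pN N p * exp (theta p * (- m_p N p * x)) * U (exp (- m_p N p * x)) - 1 - D_p N p * (exp (- m_p N p * x) * exp (- m_p N p * x))).
  { intros x. unfold eta_tilde. rewrite eta_explicit, f_explicit. ring. }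
  set (a := / A_pN N p).
  set (th := theta p) in *. set (m := m_p N p) in *. set (D := D_p N p) in *.
  exists (fun x => a * exp (th * (- m * x)) * (- m * th * U (exp (- m * x)) - m * exp (- m * x) * U1 (exp (- m * x))) + 2 * m * D * (exp (- m * x) * exp (- m * x))).
  exists (fun x => a * exp (th * (- m * x)) * (m^2 * th^2 * U (exp (- m * x)) + 2 * m^2 * th * exp (- m * x) * U1 (exp (- m * x)) + m^2 * exp (- m * x) * U1 (exp (- m * x)) + m^2 * (exp (- m * x))^2 * U2 (exp (- m * x))) - 4 * m^2 * D * (exp (- m * x) * exp (- m * x))).
  split; [|split].
  - intros x. apply (is_derive_ext (fun x => a * exp (th * (- m * x)) * U (exp (- m * x)) - 1 - D * (exp (- m * x) * exp (- m * x)))).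
    { intros t. rewrite Hext. reflexivity. }
    auto_derive. eexists; apply (proj1 (HU _ (exp_pos _))).
    fixU HU. field.
  - intros x. auto_derive.
    repeat split; try (eexists; apply (proj1 (HU _ (exp_pos _)))); try (eexists; apply (proj1 (proj2 (HU _ (exp_pos _))))).
    fixU HU. field.
  - intros x. rewrite Hext. unfold phi_p. rewrite eta_explicit. fold th m a.
    replace (1 + (a * exp (th * (- m * x)) * U (exp (- m * x)) - 1)) with (a * exp (th * (- m * x)) * U (exp (- m * x))) by ring.
    unfold a, th, m. rewrite rpow_full by (auto; apply Hpos, exp_pos). fold a th m.
    destruct (HU _ (exp_pos (- m * x))) as (_ & _ & Hode).
    replace ((exp (- m * x))^2) with (exp (- m * x) ^ 2) by reflexivity.
    apply alg_id with (nN := INR N).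
    + apply Rgt_not_eq, exp_pos.
    + exact Hode.
    + exact Hal.
    + rewrite <- Hka. exact Hm2.
    + exact HDden.
Qed.


Lemma h_bounds p y F M den : 1000 <= p -> 0 < F -> 0 <= M < 0.55 ->
  (1 - M) * F <= y <= (1 + M) * F -> p * F <= 1/4 -> 0 <= den <= 7 * p ->
  -(164/100) * p^2 * y^2 <= phi_p p y + den * F * y <= -(43/100) * p^2 * y^2.
Proof.
  intros Hp HF HM Hy HpF Hden.
  assert (Hy0 : 0 < y) by nra.
  assert (Hpy : p * y <= 0.3875) by nra.
  assert (Hyy : y <= 0.0004).
  { apply (Rmult_le_reg_l p). lra. nra. }
  unfold phi_p, Rpower.
  assert (Hln1 : ln (1 + y) <= y) by (apply ln_upper; lra).
  assert (Hln2 : y - y^2/2 <= ln (1 + y)) by (apply ln_lower; lra).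
  set (t := p * ln (1 + y)).
  assert (Ht1 : t <= p * y) by (unfold t; nra).
  assert (Ht2 : p * (y - y^2/2) <= t) by (unfold t; nra).
  assert (He1 : exp t <= / (1 - p * y)).
  { eapply Rle_trans. 2: apply exp_upper; lra.
    destruct (Req_dec t (p*y)) as [E|E]. rewrite E; lra. apply Rlt_le, exp_increasing. lra. }
  assert (Ht0 : 0 <= p * (y - y^2/2)) by nra.
  assert (He2 : 1 + t + t^2/2 <= exp t) by (apply exp_taylor2; lra).
  assert (Hinv : / (1 - p * y) <= 1 + p * y + (1/0.6125) * (p*y)^2).
  { apply (Rmult_le_reg_r (1 - p*y)). lra. rewrite Rinv_l by lra. nra. }
  assert (Hdy : den * F * y <= 7 * p * (y / 0.45) * y).
  { assert (F <= y / 0.45). { replace F with ((0.45 * F) / 0.45) by (field; lra). unfold Rdiv. apply Rmult_le_compat_r. lra. nra. }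
    apply Rmult_le_compat_r. lra. apply Rmult_le_compat; nra. }
  assert (Hdy0 : 0 <= den * F * y) by (apply Rmult_le_pos; nra).
  assert (Ht2sq : (p * (y - y^2/2))^2 <= t^2) by (apply pow_incr; lra).
  assert (Hsq : (p * (y - y^2/2))^2 >= 0.998 * p^2 * y^2).
  { replace ((p * (y - y^2/2))^2) with (p^2 * y^2 * (1 - y/2)^2) by field.
    assert ((1 - y/2)^2 >= 0.998) by nra.
    assert (0 <= p^2 * y^2) by nra. nra. }
  split.
  - nra.
  - assert (Hpy2 : 0 <= p * y^2) by nra.
    assert (16.06 * p * y^2 <= 0.069 * p^2 * y^2) by nra.
    nra.
Qed.


Lemma exp_ge_50 X : 5.4 <= X -> 50 <= exp X.
Proof.
  intros HX. replace X with (X/2 + X/2) by field. rewrite exp_plus.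
  assert (H := exp_taylor2 (X/2)). assert (1 + X/2 + (X/2)^2/2 >= 7.3) by nra.
  assert (7.3 <= exp (X/2)) by (apply Rle_trans with (1 + X/2 + (X/2)^2/2); [lra| apply H; lra]).
  nra.
Qed.

Lemma exponent_bound N p : 3 <= INR N -> 1000 <= p ->
  0 < p - 1 - (alpha_p N p / 2)^2 ->
  1.8 * beta_p N p <= alpha_p N p / 2 + 4 * m_p N p.
Proof.
  intros HN Hp HD.
  destruct (consts N p HN Hp) as (Hth & Hth2 & Hka & Hkapos & Hm & Hm2 & Hal & Halpos & HDp & HD4 & HDden & Hden7 & Hmlow).
  assert (Hb2 : beta_p N p ^ 2 = p - 1 - (alpha_p N p / 2)^2).
  { unfold beta_p. rewrite Rabs_pos_eq by lra.
    assert (E := sqrt_sqrt (p - 1 - (alpha_p N p / 2)^2) ltac:(lra)).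
    rewrite <- E at 2. ring. }
  assert (Hb0 : 0 <= beta_p N p) by (unfold beta_p; apply sqrt_pos).
  set (b := beta_p N p) in *. set (al := alpha_p N p) in *. set (m := m_p N p) in *. set (th := theta p) in *.
  assert (HS : al / 2 + 4 * m >= m * (INR N + 5) / 2) by (rewrite Hal; nra).
  assert (HN2 : (INR N + 5)^2 >= 28 * (INR N - 2)) by (pose proof (pow2_ge_0 (INR N - 9)); nra).
  assert (Hsq : (m * (INR N + 5) / 2)^2 >= 3.5 * (p - 1)).
  { replace ((m * (INR N + 5) / 2)^2) with (m^2 * (INR N + 5)^2 / 4) by field.
    assert (m^2 * (INR N + 5)^2 >= (p-1) / (2 * (INR N - 2)) * (28 * (INR N - 2))).
    { apply Rle_ge. apply Rmult_le_compat; try nra. apply Rlt_le, Rdiv_lt_0_compat; lra. }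
    replace ((p-1) / (2 * (INR N - 2)) * (28 * (INR N - 2))) with (14 * (p - 1)) in H by (field; lra).
    lra. }
  assert (Hpos : 0 <= m * (INR N + 5) / 2) by nra.
  assert (Hb2le : b^2 <= p - 1) by nra.
  nra.
Qed.


Lemma PN_lt N p c : c_condition N p c -> P_N N p c < / 2.
Proof.
  unfold c_condition. destruct (N <? 10)%nat; auto.
  intros H. assert (0 < E_p N p) by (unfold E_p; apply exp_pos).
  assert ((1 - E_p N p) / (1 + E_p N p) < 1).
  { apply (Rmult_lt_reg_r (1 + E_p N p)). lra. unfold Rdiv. rewrite Rmult_assoc, Rinv_l by lra. lra. }
  lra.
Qed.

Lemma region N p U c eps0 z :
  Rbar_le (zeta1_star N p U c eps0) (Finite z) ->
  forall x, z < x -> zeta_tilde N p c <= x /\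
     Rabs (eta_tilde N p U x) <= (1 + eps0) * P_N N p c * f_p N p x.
Proof.
  intros Hz x Hx.
  destruct (classic (exists w, zeta1_set N p U c eps0 w /\ w < x)) as [[w [[Hw1 Hw2] Hwx]]|Hno].
  - split. lra. apply Hw2. lra.
  - exfalso. destruct (Glb_Rbar_correct (zeta1_set N p U c eps0)) as [_ Hg].
    assert (Hlb : is_lb_Rbar (zeta1_set N p U c eps0) (Finite x)).
    { intros w Hw. simpl. destruct (Rle_dec x w); auto. exfalso. apply Hno. exists w. split; auto. lra. }
    specialize (Hg _ Hlb). unfold zeta1_star in Hz.
    assert (Rbar_le (Finite x) (Finite z)) by (eapply Rbar_le_trans; eauto).
    simpl in H. lra.
Qed.

Lemma f_zt N p c x : 3 <= INR N -> 1000 <= p -> 0 < c < 1 -> zeta_tilde N p c <= x ->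
  0 < f_p N p x /\ p * f_p N p x <= 1/4.
Proof.
  intros HN Hp Hc Hx.
  destruct (consts N p HN Hp) as (Hth & Hth2 & Hka & Hkapos & Hm & Hm2 & Hal & Halpos & HDp & HD4 & HDden & Hden7 & Hmlow).
  unfold f_p. split. apply Rmult_lt_0_compat; auto; apply exp_pos.
  assert (Hsp : 0 < sqrt p) by (apply sqrt_lt_R0; lra).
  assert (Hcs : 0 < c / sqrt p) by (apply Rdiv_lt_0_compat; lra).
  assert (Hz : exp (- 2 * m_p N p * zeta_tilde N p c) = c^2 / p).
  { unfold zeta_tilde. replace (- 2 * m_p N p * (- ln (c / sqrt p) / m_p N p)) with (ln (c / sqrt p) + ln (c / sqrt p)) by (field; lra).
    rewrite exp_plus, exp_ln by auto.
    replace (c / sqrt p * (c / sqrt p)) with (c^2 / (sqrt p * sqrt p)) by (field; lra).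
    rewrite sqrt_sqrt by lra. reflexivity. }
  assert (exp (- 2 * m_p N p * x) <= c^2 / p).
  { rewrite <- Hz. destruct (Req_dec x (zeta_tilde N p c)) as [E|E]. rewrite E; lra.
    apply Rlt_le, exp_increasing. nra. }
  assert (p * (c^2/p) = c^2) by (field; lra).
  assert (c^2 <= 1) by nra.
  pose proof (exp_pos (- 2 * m_p N p * x)).
  assert (p * exp (- 2 * m_p N p * x) <= 1).
  { apply Rle_trans with (p * (c^2/p)). apply Rmult_le_compat_l; lra. lra. }
  replace (p * (D_p N p * exp (- 2 * m_p N p * x))) with (D_p N p * (p * exp (- 2 * m_p N p * x))) by ring.
  apply Rle_trans with (D_p N p * 1). apply Rmult_le_compat_l; lra. lra.
Qed.


Lemma kcond h0 h1 y0 y1 F0 F1 P eaT e2 M :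
  0 < P -> h0 <= -(43/100) * P * y0^2 -> -(164/100) * P * y1^2 <= h1 ->
  (1 - M) * F0 <= y0 -> 0 <= y1 <= (1 + M) * F1 -> F1 = F0 * e2 -> 0 < F0 -> 0 <= M < 0.55 ->
  0 < eaT -> 0 < e2 -> eaT * e2 * e2 <= 1/50 -> h0 <= eaT * h1.
Proof.
  intros HP Hh0 Hh1 Hy0 Hy1 HF1 HF0 HM Hea He2 Hexp.
  assert (Hy0sq : ((1 - M) * F0)^2 <= y0^2) by (apply pow_incr; split; nra).
  assert (Hy1sq : y1^2 <= ((1 + M) * F1)^2) by (apply pow_incr; split; nra).
  assert (H1 : h0 <= -(43/100) * P * ((1 - M) * F0)^2) by nra.
  assert (H2' : h1 >= - (164/100) * P * ((1 + M) * F1)^2) by nra.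
  assert (H2 : eaT * h1 >= - eaT * (164/100) * P * ((1 + M) * F1)^2).
  { replace (- eaT * (164/100) * P * ((1 + M) * F1)^2) with (eaT * (- (164/100) * P * ((1 + M) * F1)^2)) by ring.
    apply Rle_ge, Rmult_le_compat_l; lra. }
  rewrite HF1 in H2.
  replace (- eaT * (164/100) * P * ((1 + M) * (F0 * e2))^2) with
     (- (eaT * e2 * e2) * (164/100) * P * (1 + M)^2 * F0^2) in H2 by ring.
  assert (HF0P : 0 < P * F0^2) by (apply Rmult_lt_0_compat; [lra| apply pow_lt; lra]).
  assert ((eaT * e2 * e2) * (164/100) * (1 + M)^2 <= (43/100) * (1 - M)^2).
  { assert (0 <= (1+M)^2 <= 2.4025) by (split; nra).
    assert ((1-M)^2 >= 0.2025) by nra.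
    assert (0 <= eaT * e2 * e2) by (apply Rmult_le_pos; [apply Rmult_le_pos|]; lra).
    assert ((eaT * e2 * e2) * (1 + M)^2 <= 1/50 * 2.4025) by (apply Rmult_le_compat; lra).
    lra. }
  replace (-(43/100) * P * ((1 - M) * F0)^2) with (- ((43/100) * (1 - M)^2) * (P * F0^2)) in H1 by ring.
  replace (- (eaT * e2 * e2) * (164/100) * P * (1 + M)^2 * F0^2) with
     (- ((eaT * e2 * e2) * (164/100) * (1 + M)^2) * (P * F0^2)) in H2 by ring.
  nra.
Qed.

Lemma decay_gen w c x G M D m : w - 2 * m = - c ->
  Rabs G <= M * (D * exp (- 2 * m * x)) -> Rabs (exp (w * x) * G) <= M * D * exp (- c * x).
Proof.
  intros Hw HG. rewrite Rabs_mult, Rabs_pos_eq by (apply Rlt_le, exp_pos).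
  replace (M * D * exp (- c * x)) with (exp (w * x) * (M * (D * exp (- 2 * m * x)))).
  apply Rmult_le_compat_l. apply Rlt_le, exp_pos. auto.
  replace (- c * x) with (w * x + - 2 * m * x) by (rewrite <- Hw; ring). rewrite exp_plus. ring.
Qed.


Set Bullet Behavior "Strict Subproofs".

Theorem lemma2p3 (N : nat) (c : R) :
  (3 <= N)%nat ->
  0 < c < 1 ->
  (exists p1 : R, forall p, p1 <= p -> c_condition N p c) ->
  exists e1 : R, 0 < e1 /\
    forall eps0 : R, 0 < eps0 < e1 ->
      exists p0 : R, 0 < p0 /\
        forall (p : R) (U : R -> R),
          p0 <= p ->
          (INR N + 2) / (INR N - 2) < p ->
          is_Ustar N p U ->
          forall z : R, Rbar_le (zeta1_star N p U c eps0) (Finite z) ->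
            eta_tilde N p U z <= 0.
Proof.
  intros HN Hc [p1 Hp1].
  exists (1/10). split; [lra|]. intros eps0 Heps.
  exists (Rmax p1 1000). split. { pose proof (Rmax_r p1 1000). lra. }
  intros p U Hp _ HUs z Hz.
  assert (Hp1000 : 1000 <= p) by (pose proof (Rmax_r p1 1000); lra).
  assert (Hpp1 : p1 <= p) by (pose proof (Rmax_l p1 1000); lra).
  assert (HN' : 3 <= INR N) by (apply le_INR in HN; simpl in HN; lra).
  destruct (consts N p HN' Hp1000) as (Hth & Hth2 & Hka & Hkapos & Hm & Hm2 & Hal & Halpos & HDp & HD4 & HDden & Hden7 & Hmlow).
  destruct HUs as [U1 [U2 [HU [Hpos _]]]].
  destruct (eta_ode N p U U1 U2 HN' Hp1000 HU Hpos) as [g1 [g2 [Hg [Hg1 Hode]]]].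
  pose proof (PN_lt N p c (Hp1 p Hpp1)) as HPN.
  set (M := (1 + eps0) * P_N N p c).
  pose proof (region N p U c eps0 z Hz) as Hreg. fold M in Hreg.
  assert (HM0 : 0 <= M).
  { destruct (Hreg (z+1)) as [H1 H2]; [lra|].
    destruct (f_zt N p c (z+1) HN' Hp1000 Hc H1) as [Hf _].
    pose proof (Rabs_pos (eta_tilde N p U (z + 1))).
    destruct (Rle_dec 0 M); auto. nra. }
  assert (HM : M < 0.55).
  { assert (0 <= P_N N p c). { unfold M in HM0. destruct (Rle_dec 0 (P_N N p c)); auto. nra. }
    unfold M. nra. }
  set (den := 4 * m_p N p ^ 2 + 2 * alpha_p N p * m_p N p + (p - 1)) in *.
  assert (Hden0 : 0 <= den) by (unfold den; pose proof (Rmult_le_pos _ _ Halpos (Rlt_le _ _ Hm)); nra).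
  set (h := fun x => phi_p p (eta_p N p U x) + m_p N p ^ 2 * (exp (- m_p N p * x) * exp (- m_p N p * x)) * eta_p N p U x).
  assert (Hhb : forall x, z < x ->
    -(164/100) * p^2 * (eta_p N p U x)^2 <= h x <= -(43/100) * p^2 * (eta_p N p U x)^2 /\
    (1 - M) * f_p N p x <= eta_p N p U x <= (1 + M) * f_p N p x /\ 0 < f_p N p x).
  { intros x Hx. destruct (Hreg x Hx) as [H1 H2].
    destruct (f_zt N p c x HN' Hp1000 Hc H1) as [Hf HpF].
    apply abs_le_inv in H2. unfold eta_tilde in H2.
    assert (Hy : (1 - M) * f_p N p x <= eta_p N p U x <= (1 + M) * f_p N p x) by lra.
    split; [|split; auto].
    unfold h. 
    replace (m_p N p ^ 2 * (exp (- m_p N p * x) * exp (- m_p N p * x))) with (den * f_p N p x).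
    2:{ rewrite f_explicit. rewrite <- HDden. unfold den. ring. }
    apply h_bounds with (M := M); auto; lra. }
  assert (Hmain : forall s, z < s -> eta_tilde N p U s <= 0).
  { destruct (Rlt_dec 0 (p - 1 - (alpha_p N p / 2)^2)) as [HD|HD].
    -
      assert (Hb2 : beta_p N p ^ 2 = p - 1 - (alpha_p N p / 2)^2).
      { unfold beta_p. rewrite Rabs_pos_eq by lra.
        assert (E := sqrt_sqrt (p - 1 - (alpha_p N p / 2)^2) ltac:(lra)).
        rewrite <- E at 2. ring. }
      assert (Hb0 : 0 <= beta_p N p) by (unfold beta_p; apply sqrt_pos).
      assert (Hb : 0 < beta_p N p).
      { destruct (Req_dec (beta_p N p) 0) as [E|E]; [|lra]. rewrite E in Hb2. lra. }
      pose proof (exponent_bound N p HN' Hp1000 HD) as Hexp.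
      apply (complex_case (alpha_p N p / 2) (beta_p N p) (p - 1) (eta_tilde N p U) g1 g2 h z
               (M * D_p N p) (alpha_p N p / 2 + 2 * m_p N p)); auto.
      + lra.
      + intros x Hx.
        set (T := PI / beta_p N p).
        assert (HT : 0 < T) by (unfold T; apply Rdiv_lt_0_compat; [apply PI_RGT_0|lra]).
        destruct (Hhb x Hx) as [[H0a H0b] [Hy0 Hf0]].
        destruct (Hhb (x + T)) as [[H1a H1b] [Hy1 Hf1]]; [lra|].
        replace (- (alpha_p N p / 2) * (x + T)) with (- (alpha_p N p / 2) * x + - (alpha_p N p / 2) * T) by ring.
        rewrite exp_plus, Rmult_assoc. apply Rmult_le_compat_l. apply Rlt_le, exp_pos.
        apply kcond with (y0 := eta_p N p U x) (y1 := eta_p N p U (x + T)) (F0 := f_p N p x)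
          (F1 := f_p N p (x + T)) (P := p^2) (e2 := exp (- 2 * m_p N p * T)) (M := M); auto.
        * apply pow_lt; lra.
        * lra.
        * split; [nra|lra].
        * unfold f_p. rewrite (Rmult_assoc (D_p N p)), <- exp_plus. f_equal. f_equal. ring.
        * apply exp_pos.
        * apply exp_pos.
        * rewrite <- !exp_plus.
          replace (- (alpha_p N p / 2) * T + - 2 * m_p N p * T + - 2 * m_p N p * T) with
            (- ((alpha_p N p / 2 + 4 * m_p N p) * T)) by ring.
          rewrite exp_Ropp.
          assert (HX : 5.4 <= (alpha_p N p / 2 + 4 * m_p N p) * T).
          { unfold T. pose proof PI2_3_2.
            assert (1.8 <= (alpha_p N p / 2 + 4 * m_p N p) / beta_p N p).
            { apply (Rmult_le_reg_r (beta_p N p)). lra. unfold Rdiv. rewrite Rmult_assoc, Rinv_l by lra. lra. }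
            replace ((alpha_p N p / 2 + 4 * m_p N p) * (PI / beta_p N p)) with
              (((alpha_p N p / 2 + 4 * m_p N p) / beta_p N p) * PI) by (field; lra).
            nra. }
          pose proof (exp_ge_50 _ HX).
          replace (1/50) with (/ 50) by field. apply Rinv_le_contravar; lra.
      + intros x Hx. destruct (Hreg x Hx) as [_ H]. unfold f_p in H.
        apply decay_gen with (m := m_p N p). ring. exact H.
    -
      assert (HD' : 0 <= - (p - 1 - (alpha_p N p / 2)^2)) by lra.
      assert (Hb2 : beta_p N p ^ 2 = - (p - 1 - (alpha_p N p / 2)^2)).
      { unfold beta_p. rewrite Rabs_left1 by lra.
        assert (E := sqrt_sqrt (- (p - 1 - (alpha_p N p / 2)^2)) HD').
        rewrite <- E at 2. ring. }
      assert (Hb0 : 0 <= beta_p N p) by (unfold beta_p; apply sqrt_pos).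
      assert (Hba : beta_p N p < alpha_p N p / 2) by nra.
      apply (real_case (alpha_p N p / 2) (beta_p N p) (p - 1) (eta_tilde N p U) g1 g2 h z
               (M * D_p N p) (alpha_p N p / 2 - beta_p N p + 2 * m_p N p)); auto.
      + lra.
      + lra.
      + intros x Hx. destruct (Hhb x Hx) as [[_ H] _]. pose proof (pow2_ge_0 (eta_p N p U x)). nra.
      + intros x Hx. destruct (Hreg x Hx) as [_ H]. unfold f_p in H.
        apply decay_gen with (m := m_p N p). ring. exact H. }
  destruct (Rle_dec (eta_tilde N p U z) 0) as [|Hgz]; auto. exfalso.
  assert (Hcont := cont_of_deriv _ z _ (Hg z)).
  destruct (Hcont (eta_tilde N p U z)) as [alp [Halp Hx]]. lra.
  specialize (Hx (z + alp / 2)).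
  assert (Hle := Hmain (z + alp/2) ltac:(lra)).
  assert (Hd : D_x no_cond z (z + alp / 2) /\ R_dist (z + alp / 2) z < alp).
  { split. split. exact I. lra. unfold R_dist. rewrite Rabs_pos_eq; lra. }
  specialize (Hx Hd). simpl in Hx. unfold R_dist in Hx.
  apply Rabs_def2 in Hx. lra.
Qed.
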